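(* Let $a,b,k\in\mathbb{N}$ with $k\le\min(a,b)$ and $P=[a]\times[b]$ with the product order. Then $(\mathcal{A}_k(P),\le_k)\cong\mathcal{C}(a,k)\times\mathcal{C}(b,k)$ as posets.
   Context: $[n]=\{1,\dots,n\}$. For a finite poset $P$, $\mathcal{A}_k(P)$ is the set of antichains of $P$ of size $k$; for $A,B\in\mathcal{A}_k(P)$, $A\prec_k B$ means $A\setminus B=\{a\}$, $B\setminus A=\{b\}$ are singletons with $a<_P b$, and $\le_k$ is the reflexive transitive closure of $\prec_k$. For $k\le n$, $\mathcal{C}(n,k)$ is the set of $k$-element subsets of $[n]$ written as increasing sequences $(x_1<\dots<x_k)$, with $\mathbf{x}\le\mathbf{y}$ iff $x_i\le y_i$ for all $i$; products carry the product order. *)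

(* Defs.v *)
From Stdlib Require Import Relations.Relation_Operators.
From mathcomp Require Import all_boot.
Set Implicit Arguments. Unset Strict Implicit. Unset Printing Implicit Defensive.

Section Antichains.
Variables (T : finType) (le : rel T).

Definition slt (x y : T) : bool := le x y && (x != y).

Definition antichain (A : {set T}) : bool :=
  [forall x in A, forall y in A, le x y ==> (x == y)].

Definition antichain_k (k : nat) (A : {set T}) : bool :=
  antichain A && (#|A| == k).

Definition prec_k (k : nat) (A B : {set T}) : Prop :=
  antichain_k k A /\ antichain_k k B /\
  exists a b, A :\: B = [set a] /\ B :\: A = [set b] /\ slt a b.

Definition le_k (k : nat) : {set T} -> {set T} -> Prop := @clos_refl_trans {set T} (prec_k k).

End Antichains.

(* P = [a] x [b] with product order; [n] is modelled by 'I_n = {0,...,n-1} *)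
Definition grid_le (a b : nat) : rel ('I_a * 'I_b) :=
  fun p q => (p.1 <= q.1)%N && (p.2 <= q.2)%N.

Definition sorted_seq (n : nat) (X : {set 'I_n}) : seq nat :=
  sort leq [seq val x | x in X].

Definition C_le (n : nat) (X Y : {set 'I_n}) : bool :=
  all2 leq (sorted_seq X) (sorted_seq Y).

Definition Ak (a b k : nat) :=
  {A : {set 'I_a * 'I_b} | antichain_k (@grid_le a b) k A}.
Definition Cnk (n k : nat) := {X : {set 'I_n} | #|X| == k}.

(* Main.v *)
Require Import Defs.
From Stdlib Require Import Relations.Relation_Operators Classical.
From mathcomp Require Import all_boot zify.
Set Implicit Arguments. Unset Strict Implicit. Unset Printing Implicit Defensive.


Definition ac {a b} (A : {set 'I_a * 'I_b}) := antichain (@grid_le a b) A.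

Lemma acP a b (A : {set 'I_a * 'I_b}) p q :
  ac A -> p \in A -> q \in A -> grid_le p q -> p = q.
Proof.
move=> /forall_inP H pA qA le; move: (H p pA) => /forall_inP /(_ q qA).
by rewrite le => /eqP.
Qed.

Lemma acI a b (A : {set 'I_a * 'I_b}) :
  (forall p q, p \in A -> q \in A -> grid_le p q -> p = q) -> ac A.
Proof.
move=> H; apply/forall_inP => p pA; apply/forall_inP => q qA.
by apply/implyP => le; rewrite (H p q pA qA le).
Qed.

Lemma ac_eq1 a b (A : {set 'I_a * 'I_b}) p q :
  ac A -> p \in A -> q \in A -> (p.1 : nat) = q.1 -> p = q.
Proof.
move=> H pA qA e; case: (leqP p.2 q.2) => h.
  by apply: (acP H pA qA); rewrite /grid_le e leqnn h.
by apply/esym/(acP H qA pA); rewrite /grid_le e leqnn (ltnW h).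
Qed.

Lemma ac_eq2 a b (A : {set 'I_a * 'I_b}) p q :
  ac A -> p \in A -> q \in A -> (p.2 : nat) = q.2 -> p = q.
Proof.
move=> H pA qA e; case: (leqP p.1 q.1) => h.
  by apply: (acP H pA qA); rewrite /grid_le e leqnn h.
by apply/esym/(acP H qA pA); rewrite /grid_le e leqnn (ltnW h).
Qed.

Lemma ac_lt1 a b (A : {set 'I_a * 'I_b}) p q :
  ac A -> p \in A -> q \in A -> p.1 < q.1 -> q.2 < p.2.
Proof.
move=> H pA qA lt; rewrite ltnNge; apply/negP => h.
have e := acP H pA qA; rewrite /grid_le (ltnW lt) h in e.
by move: lt; rewrite (e isT) ltnn.
Qed.

Lemma ac_lt2 a b (A : {set 'I_a * 'I_b}) p q :
  ac A -> p \in A -> q \in A -> p.2 < q.2 -> q.1 < p.1.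
Proof.
move=> H pA qA lt; rewrite ltnNge; apply/negP => h.
have e := acP H pA qA; rewrite /grid_le (ltnW lt) h in e.
by move: lt; rewrite (e isT) ltnn.
Qed.


Definition cnt {n} (X : {set 'I_n}) (t : nat) := \sum_(x in X) ((x : nat) < t : nat).

Lemma cnt_mono n (X : {set 'I_n}) t t' : t <= t' -> cnt X t <= cnt X t'.
Proof.
move=> H; apply: leq_sum => x _.
by case: (ltnP x t) => // h; rewrite (leq_trans h H).
Qed.

Lemma rk_lt_card n (X : {set 'I_n}) (x : 'I_n) : x \in X -> cnt X x < #|X|.
Proof.
move=> xX; rewrite /cnt -sum1_card (bigD1 x xX) /= ltnn add0n (bigD1 x xX) /= add1n ltnS.
by apply: leq_sum => y _; case: (_ < _).
Qed.

Lemma rk_strict n (X : {set 'I_n}) (x : 'I_n) (y : nat) :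
  x \in X -> x < y -> cnt X x < cnt X y.
Proof.
move=> xX xy; rewrite /cnt (bigD1 x xX) /= ltnn add0n (bigD1 x xX) /= xy add1n ltnS.
apply: leq_sum => z _; case: (ltnP z x) => // h.
by rewrite (ltn_trans h xy).
Qed.

Lemma rk_inj n (X : {set 'I_n}) (x y : 'I_n) :
  x \in X -> y \in X -> cnt X x = cnt X y -> x = y.
Proof.
move=> xX yX e; case: (ltngtP x y) => h.
- by move: (rk_strict xX h); rewrite e ltnn.
- by move: (rk_strict yX h); rewrite e ltnn.
- exact: val_inj.
Qed.

Lemma rk_surj n (X : {set 'I_n}) j : j < #|X| -> exists2 x, x \in X & cnt X x = j.
Proof.
move=> jlt.
set s := map (fun x : 'I_n => cnt X x) (enum X).
have us : uniq s.
  rewrite map_inj_in_uniq ?enum_uniq // => x y; rewrite !mem_enum; exact: rk_inj.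
have sub : {subset s <= iota 0 #|X|}.
  move=> v /mapP [x]; rewrite mem_enum => xX ->; rewrite mem_iota add0n.
  exact: rk_lt_card.
have szle : size (iota 0 #|X|) <= size s by rewrite size_iota size_map -cardE.
have [_ eqs] := uniq_min_size us sub szle.
have : j \in s by rewrite eqs mem_iota add0n.
by move=> /mapP [x]; rewrite mem_enum => xX ->; exists x.
Qed.

Lemma count_sum (T : Type) (P : pred T) (s : seq T) : count P s = \sum_(x <- s) P x.
Proof. by elim: s => [|x s IH]; rewrite ?big_nil ?big_cons //= IH. Qed.

Lemma cnt_count n (X : {set 'I_n}) t :
  count (fun v => v < t) (sorted_seq X) = cnt X t.
Proof.
rewrite /sorted_seq.
have /permP -> : perm_eq (sort leq [seq val x | x in X]) [seq val x | x in X].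
  by rewrite perm_sort.
by rewrite /image_mem count_map count_sum big_enum.
Qed.

Lemma sorted_seq_lt n (X : {set 'I_n}) : sorted ltn (sorted_seq X).
Proof.
rewrite ltn_sorted_uniq_leq sort_uniq sort_sorted ?andbT; last exact: leq_total.
by rewrite /image_mem map_inj_uniq ?enum_uniq //; apply: val_inj.
Qed.

Lemma size_sorted_seq n (X : {set 'I_n}) : size (sorted_seq X) = #|X|.
Proof. by rewrite /sorted_seq size_sort /image_mem size_map cardE. Qed.

Lemma nth_count (s : seq nat) i t : sorted ltn s -> i < size s ->
  (nth 0 s i < t) = (i < count (fun v => v < t) s).
Proof.
elim: s i => [|x s IH] i //= srt.
have allx := order_path_min ltn_trans srt; have srt' := path_sorted srt.
have c0 : t <= x -> count (fun v => v < t) s = 0.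
  move=> tx; apply/eqP; rewrite -leqn0 leqNgt -has_count; apply/hasPn => y /(allP allx) /= xy.
  by rewrite -leqNgt (leq_trans tx (ltnW xy)).
case: i => [|i] /=.
  by case: (ltnP x t) => // tx _; rewrite c0.
rewrite ltnS => isz; case: (ltnP x t) => tx.
  by rewrite add1n ltnS IH.
rewrite c0 // add0n ltn0; apply/negbTE; rewrite -leqNgt.
by apply: (leq_trans tx); apply: ltnW; apply: (allP allx); rewrite mem_nth.
Qed.

Lemma all2_nth (s s' : seq nat) : all2 leq s s' <->
  size s = size s' /\ forall i, i < size s -> nth 0 s i <= nth 0 s' i.
Proof.
elim: s s' => [|x s IH] [|y s'] //=; split => //.
- by case=> [].
- by case=> [].
- move=> /andP [xy /IH [sz H]]; split; first by rewrite sz.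
  by case=> [|i] //= /H.
- move=> [[sz] H]; apply/andP; split; first exact: (H 0).
  by apply/IH; split => // i isz; apply: (H i.+1).
Qed.

Lemma C_leP n (X Y : {set 'I_n}) : #|X| = #|Y| ->
  C_le X Y <-> forall t, cnt Y t <= cnt X t.
Proof.
move=> eXY; rewrite /C_le.
have sX := sorted_seq_lt X; have sY := sorted_seq_lt Y.
split.
- move=> /all2_nth [_ H] t; rewrite -!cnt_count.
  case E: (count _ (sorted_seq Y)) => [|c] //.
  have csz : c < size (sorted_seq Y).
    by rewrite -ltnS -E; apply: leq_ltn_trans (count_size _ _) _.
  have h1 : nth 0 (sorted_seq Y) c < t by rewrite nth_count // E.
  have csz' : c < size (sorted_seq X) by rewrite size_sorted_seq eXY -size_sorted_seq.
  have := leq_ltn_trans (H c csz') h1.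
  by rewrite nth_count.
- move=> H; apply/all2_nth; split; first by rewrite !size_sorted_seq eXY.
  move=> i isz.
  have isz' : i < size (sorted_seq Y) by rewrite size_sorted_seq -eXY -size_sorted_seq.
  have h1 : i < count (fun v => v < (nth 0 (sorted_seq Y) i).+1) (sorted_seq Y).
    by rewrite -nth_count.
  rewrite cnt_count in h1.
  have := leq_trans h1 (H _).
  by rewrite -cnt_count -nth_count.
Qed.


Definition c1 {a b} (A : {set 'I_a * 'I_b}) (t : nat) := \sum_(q in A) ((q.1 : nat) < t : nat).
Definition c2 {a b} (A : {set 'I_a * 'I_b}) (t : nat) := \sum_(q in A) ((q.2 : nat) < t : nat).

Lemma inj_fst a b (A : {set 'I_a * 'I_b}) : ac A -> {in A &, injective (fun q => q.1)}.
Proof. by move=> H p q pA qA e; apply: (ac_eq1 H pA qA); rewrite e. Qed.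
Lemma inj_snd a b (A : {set 'I_a * 'I_b}) : ac A -> {in A &, injective (fun q => q.2)}.
Proof. by move=> H p q pA qA e; apply: (ac_eq2 H pA qA); rewrite e. Qed.

Lemma cnt_fst a b (A : {set 'I_a * 'I_b}) t : ac A -> cnt [set q.1 | q in A] t = c1 A t.
Proof. by move=> H; rewrite /cnt big_imset //; apply: inj_fst. Qed.
Lemma cnt_snd a b (A : {set 'I_a * 'I_b}) t : ac A -> cnt [set q.2 | q in A] t = c2 A t.
Proof. by move=> H; rewrite /cnt big_imset //; apply: inj_snd. Qed.
Lemma card_fst a b (A : {set 'I_a * 'I_b}) : ac A -> #|[set q.1 | q in A]| = #|A|.
Proof. by move=> H; rewrite card_in_imset //; apply: inj_fst. Qed.
Lemma card_snd a b (A : {set 'I_a * 'I_b}) : ac A -> #|[set q.2 | q in A]| = #|A|.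
Proof. by move=> H; rewrite card_in_imset //; apply: inj_snd. Qed.

Definition gset {a b} (X : {set 'I_a}) (Y : {set 'I_b}) : {set 'I_a * 'I_b} :=
  [set q : 'I_a * 'I_b | [&& q.1 \in X, q.2 \in Y & (cnt X q.1 + cnt Y q.2).+1 == #|X|]].

Lemma pair_ext (A B : Type) (p q : A * B) : p.1 = q.1 -> p.2 = q.2 -> p = q.
Proof. by case: p q => [? ?] [? ?] /= -> ->. Qed.

Section G.
Variables (a b : nat) (X : {set 'I_a}) (Y : {set 'I_b}).
Hypothesis eXY : #|X| = #|Y|.

Lemma gsetP q : q \in gset X Y -> [/\ q.1 \in X, q.2 \in Y & (cnt X q.1 + cnt Y q.2).+1 = #|X|].
Proof. by rewrite inE => /and3P [h1 h2 /eqP h3]; split. Qed.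

Lemma gset_inj1 : {in gset X Y &, injective (fun q => q.1)}.
Proof.
move=> p q /gsetP [p1 p2 ep] /gsetP [q1 q2 eqq] e; apply: pair_ext => //.
apply: rk_inj => //; rewrite e in ep; lia.
Qed.

Lemma gset_inj2 : {in gset X Y &, injective (fun q => q.2)}.
Proof.
move=> p q /gsetP [p1 p2 ep] /gsetP [q1 q2 eqq] e; apply: pair_ext => //.
apply: rk_inj => //; rewrite e in ep; lia.
Qed.

Lemma gset_fst : [set q.1 | q in gset X Y] = X.
Proof.
apply/setP => x; apply/imsetP/idP => [[q /gsetP [? _ _] ->] //|xX].
have hx := rk_lt_card xX.
have [y yY ey] : exists2 y, y \in Y & cnt Y y = #|X| - (cnt X x).+1.
  by apply: rk_surj; lia.
exists (x, y) => //; rewrite inE /= xX yY ey; apply/eqP; by rewrite -addnS (subnSK hx) (subnKC (ltnW hx)).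
Qed.

Lemma gset_snd : [set q.2 | q in gset X Y] = Y.
Proof.
apply/setP => y; apply/imsetP/idP => [[q /gsetP [_ ? _] ->] //|yY].
have hy := rk_lt_card yY.
have [x xX ex] : exists2 x, x \in X & cnt X x = #|X| - (cnt Y y).+1.
  by apply: rk_surj; lia.
exists (x, y) => //; rewrite inE /= xX yY ex; apply/eqP; rewrite eXY -addSn (subnSK hy) (subnK (ltnW hy)) //.
Qed.

Lemma card_gset : #|gset X Y| = #|X|.
Proof. by rewrite -{2}gset_fst card_in_imset //; apply: gset_inj1. Qed.

Lemma ac_gset : ac (gset X Y).
Proof.
apply: acI => p q /gsetP [p1 p2 ep] /gsetP [q1 q2 eqq] /andP [l1 l2].
have m1 := cnt_mono X l1; have m2 := cnt_mono Y l2.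
apply: pair_ext; [apply: (@rk_inj _ X) | apply: (@rk_inj _ Y)] => //; move: ep eqq m1 m2; clear; set u := cnt X p.1; set v := cnt X q.1; set w := cnt Y p.2; set z := cnt Y q.2; set N := #|X|; move=> *; lia.
Qed.
End G.

Lemma sum_split a b (A : {set 'I_a * 'I_b}) p : ac A -> p \in A ->
  (c1 A p.1 + c2 A p.2).+1 = #|A|.
Proof.
move=> H pA.
have e1 : \sum_(q in A) (q == p : nat) = 1.
  rewrite (bigD1 p pA) /= eqxx big1 // => q /andP [_ /negbTE ->] //.
have -> : (c1 A p.1 + c2 A p.2).+1 = c1 A p.1 + c2 A p.2 + \sum_(q in A) (q == p : nat).
  by rewrite e1 addn1.
rewrite /c1 /c2 -!big_split -sum1_card /=.
apply: eq_bigr => q qA; case: (eqVneq q p) => [->|qp]; first by rewrite !ltnn.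
case: (ltngtP q.1 p.1) => h.
- first [by rewrite ltnNge (ltnW (ac_lt1 H qA pA h)) | by rewrite (ac_lt1 H pA qA h)].
- first [by rewrite ltnNge (ltnW (ac_lt1 H qA pA h)) | by rewrite (ac_lt1 H pA qA h)].
- by case/eqP: qp; apply: (ac_eq1 H qA pA).
Qed.

Lemma gset_f a b (A : {set 'I_a * 'I_b}) : ac A ->
  gset [set q.1 | q in A] [set q.2 | q in A] = A.
Proof.
move=> H; apply/esym/eqP; rewrite eqEcard card_gset ?card_fst ?card_snd // leqnn andbT.
apply/subsetP => p pA; rewrite inE !imset_f //= cnt_fst // cnt_snd // card_fst //.
by rewrite sum_split.
Qed.


Lemma prec_sum (T : finType) (A A' : {set T}) p p' (F : T -> nat) :
  A :\: A' = [set p] -> A' :\: A = [set p'] ->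
  \sum_(q in A) F q + F p' = \sum_(q in A') F q + F p.
Proof.
move=> d1 d2; rewrite (@big_setID _ _ _ _ A A') (@big_setID _ _ _ _ A' A) d1 d2 !big_set1 setIC.
by rewrite addnAC.
Qed.

Lemma swap_sum (T : finType) (A : {set T}) p p' (F : T -> nat) :
  p \in A -> p' \notin A ->
  \sum_(q in p' |: A :\ p) F q + F p = \sum_(q in A) F q + F p'.
Proof.
move=> pA p'A; rewrite big_setU1 /=; last by rewrite in_setD1 (negbTE p'A) andbF.
rewrite (@big_setD1 _ _ _ _ p A F pA) /=. lia.
Qed.

Lemma swap_diff (T : finType) (A : {set T}) p p' :
  p \in A -> p' \notin A ->
  A :\: (p' |: A :\ p) = [set p] /\ (p' |: A :\ p) :\: A = [set p'].
Proof.
move=> pA p'A; have pp' : p != p' by apply/eqP => e; rewrite -e pA in p'A.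
split; apply/setP => q; rewrite !inE.
- case: (eqVneq q p) => [->|qp]; first by rewrite pA (negbTE pp').
  by case: (q \in A); rewrite ?orbT ?andbF.
- case: (eqVneq q p') => [->|qp] /=; first by rewrite p'A.
  by case: (q \in A); rewrite ?andbF.
Qed.

Lemma prec_mono a b k (A A' : {set 'I_a * 'I_b}) :
  prec_k (@grid_le a b) k A A' ->
  (forall s, c1 A' s <= c1 A s) /\ (forall s, c2 A' s <= c2 A s).
Proof.
move=> [_ [_ [p [p' [d1 [d2 /andP [/andP [l1 l2] _]]]]]]].
split => s.
- have := prec_sum (fun q : 'I_a * 'I_b => ((q.1 : nat) < s : nat)) d1 d2.
  rewrite -/(c1 A s) -/(c1 A' s) => e.
  have : (p'.1 < s : nat) <= (p.1 < s : nat).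
    by case: (ltnP p'.1 s) => // h; rewrite (leq_ltn_trans l1 h).
  lia.
- have := prec_sum (fun q : 'I_a * 'I_b => ((q.2 : nat) < s : nat)) d1 d2.
  rewrite -/(c2 A s) -/(c2 A' s) => e.
  have : (p'.2 < s : nat) <= (p.2 < s : nat).
    by case: (ltnP p'.2 s) => // h; rewrite (leq_ltn_trans l2 h).
  lia.
Qed.

Lemma le_mono a b k (A B : {set 'I_a * 'I_b}) :
  le_k (@grid_le a b) k A B ->
  (forall s, c1 B s <= c1 A s) /\ (forall s, c2 B s <= c2 A s).
Proof.
elim => [x y /prec_mono //|x|x y z _ [h1 h2] _ [h3 h4]]; first by split.
by split => s; [apply: leq_trans (h3 s) (h1 s) | apply: leq_trans (h4 s) (h2 s)].
Qed.


Definition msum {a b} (A : {set 'I_a * 'I_b}) := \sum_(q in A) ((q.1 : nat) + q.2).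

Lemma sum_pos (T : finType) (A : {set T}) (P : pred T) :
  0 < \sum_(q in A) (P q : nat) -> exists2 q, q \in A & P q.
Proof.
case: (pickP [pred q | (q \in A) && P q]) => [q /andP [qA Pq]|H]; first by exists q.
rewrite big1 // => q qA; move: (H q); rewrite /= qA /= => ->.
by [].
Qed.

Lemma sum_ge (T : finType) (A : {set T}) (F : T -> nat) q :
  q \in A -> 0 < F q -> 0 < \sum_(r in A) F r.
Proof. by move=> qA h; rewrite (bigD1 q qA) /= addn_gt0 h. Qed.

Lemma c1S a b (S : {set 'I_a * 'I_b}) t :
  c1 S t.+1 = c1 S t + \sum_(q in S) ((q.1 : nat) == t : nat).
Proof.
rewrite /c1 -big_split; apply: eq_bigr => q _ /=.
by rewrite ltnS leq_eqVlt; case: ltngtP.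
Qed.
Lemma c2S a b (S : {set 'I_a * 'I_b}) t :
  c2 S t.+1 = c2 S t + \sum_(q in S) ((q.2 : nat) == t : nat).
Proof.
rewrite /c2 -big_split; apply: eq_bigr => q _ /=.
by rewrite ltnS leq_eqVlt; case: ltngtP.
Qed.

Lemma e1_le1 a b (A : {set 'I_a * 'I_b}) t : ac A -> \sum_(q in A) ((q.1 : nat) == t : nat) <= 1.
Proof.
move=> H; case: (pickP [pred q | (q \in A) && ((q.1 : nat) == t)]) => [q /andP [qA /eqP qt]|N].
  rewrite (bigD1 q qA) /= big1 ?qt ?eqxx // => r /andP [rA rq].
  apply/eqP; rewrite eqb0; apply/negP => /eqP rt; case/eqP: rq.
  by apply: (ac_eq1 H rA qA); rewrite rt qt.
rewrite big1 // => q qA; move: (N q); rewrite /= qA /= => ->; by [].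
Qed.
Lemma e2_le1 a b (A : {set 'I_a * 'I_b}) t : ac A -> \sum_(q in A) ((q.2 : nat) == t : nat) <= 1.
Proof.
move=> H; case: (pickP [pred q | (q \in A) && ((q.2 : nat) == t)]) => [q /andP [qA /eqP qt]|N].
  rewrite (bigD1 q qA) /= big1 ?qt ?eqxx // => r /andP [rA rq].
  apply/eqP; rewrite eqb0; apply/negP => /eqP rt; case/eqP: rq.
  by apply: (ac_eq2 H rA qA); rewrite rt qt.
rewrite big1 // => q qA; move: (N q); rewrite /= qA /= => ->; by [].
Qed.

Lemma c1_full a b (S : {set 'I_a * 'I_b}) t : a <= t -> c1 S t = #|S|.
Proof.
move=> ha; rewrite /c1 -sum1_card; apply: eq_bigr => q _.
by rewrite (leq_trans (ltn_ord q.1) ha).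
Qed.
Lemma c2_full a b (S : {set 'I_a * 'I_b}) t : b <= t -> c2 S t = #|S|.
Proof.
move=> bt; rewrite /c2 -sum1_card; apply: eq_bigr => q _.
by rewrite (leq_trans (ltn_ord q.2) bt).
Qed.

Lemma c1_mono a b (S : {set 'I_a * 'I_b}) t t' : t <= t' -> c1 S t <= c1 S t'.
Proof.
move=> H; apply: leq_sum => x _.
by case: (ltnP x.1 t) => // h; rewrite (leq_trans h H).
Qed.
Lemma c2_mono a b (S : {set 'I_a * 'I_b}) t t' : t <= t' -> c2 S t <= c2 S t'.
Proof.
move=> H; apply: leq_sum => x _.
by case: (ltnP x.2 t) => // h; rewrite (leq_trans h H).
Qed.


Lemma step1 a b k (A B : {set 'I_a * 'I_b}) t :
  antichain_k (@grid_le a b) k A -> antichain_k (@grid_le a b) k B ->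
  (forall s, c1 B s <= c1 A s) -> c1 B t < c1 A t ->
  exists A', [/\ prec_k (@grid_le a b) k A A', (forall s, c1 B s <= c1 A' s),
     (forall s, c2 A' s = c2 A s) & msum A' = (msum A).+1].
Proof.
move=> /andP [acA /eqP cA] /andP [acB /eqP cB] dom tlt.
have bnd : forall i, c1 B i < c1 A i -> i < a.
  move=> i h; rewrite ltnNge; apply/negP => ai; move: h.
  by rewrite !c1_full // cA cB ltnn.
have ex : exists i, c1 B i < c1 A i by exists t.
have ub : forall i, c1 B i < c1 A i -> i <= a by move=> i /bnd /ltnW.
case: (ex_maxnP ex ub) => t0 Pt0 maxt0.
have t0a := bnd _ Pt0.
have nP : c1 A t0.+1 <= c1 B t0.+1.
  by rewrite leqNgt; apply/negP => /maxt0; rewrite ltnn.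
have noA : forall q, q \in A -> (q.1 : nat) != t0.
  move=> q qA; apply/negP => /eqP e.
  have h1 := e1_le1 t0 acB; have h2 := c1S A t0; have h3 := c1S B t0.
  have h4 : 0 < \sum_(r in A) ((r.1 : nat) == t0 : nat).
    by apply: (sum_ge qA); rewrite e eqxx.
  lia.
have [q0 q0A q0t] : exists2 q, q \in A & (q.1 : nat) < t0.
  by apply: sum_pos; apply: leq_ltn_trans (leq0n _) Pt0.
pose p := [arg max_(q > q0 | (q \in A) && ((q.1 : nat) < t0)) (q.1 : nat)].
have [pA pt0 pmax] : [/\ p \in A, (p.1 : nat) < t0 &
    forall q, q \in A -> (q.1 : nat) < t0 -> (q.1 : nat) <= p.1].
  rewrite /p; case: arg_maxnP => [|r /andP [rA rt] H]; first by rewrite q0A q0t.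
  by split => // q qA qt; apply: H; rewrite qA qt.
have hx : (p.1 : nat).+1 < a by apply: leq_ltn_trans pt0 t0a.
pose p' : 'I_a * 'I_b := (Ordinal hx, p.2).
have no1 : forall q, q \in A -> (q.1 : nat) != (p.1 : nat).+1.
  move=> q qA; apply/negP => /eqP e.
  move: pt0; rewrite leq_eqVlt => /orP [/eqP e2 | lt].
  - by move: (noA q qA); rewrite e e2 eqxx.
  - have h := pmax q qA; rewrite e in h.
    by move: (h lt); rewrite ltnn.
have p'A : p' \notin A by apply/negP => /no1 /=; rewrite eqxx.
have [d1 d2] := swap_diff pA p'A.
pose A' := p' |: A :\ p.
have acA' : antichain (@grid_le a b) A'.
  apply: acI => r s; rewrite !in_setU1 !in_setD1.
  move=> /orP [/eqP -> | /andP [rp rA]] /orP [/eqP -> | /andP [sp sA]] //.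
  - move=> /andP [l1 l2].
    by move: (ac_lt1 acA pA sA l1); rewrite ltnNge l2.
  - move=> /andP [l1 l2].
    have h : (r.1 : nat) <= p.1.
      by move: l1; rewrite /= leq_eqVlt (negbTE (no1 r rA)) ltnS.
    by case/eqP: rp; apply: (acP acA rA pA); rewrite /grid_le h l2.
  - exact: (acP acA rA sA).
have cA' : #|A'| = k.
  by rewrite cardsU1 in_setD1 (negbTE p'A) andbF -cA (cardsD1 p A) pA.
exists A'; split.
- split; first by rewrite /antichain_k acA cA eqxx.
  split; first by rewrite /antichain_k acA' cA' eqxx.
  exists p, p'; split => //; split => //.
  rewrite /slt /grid_le /= leqnSn leqnn /=.
  by apply/eqP => e; move: p'A; rewrite -e pA.
- move=> s; have := swap_sum (fun q : 'I_a * 'I_b => ((q.1 : nat) < s : nat)) pA p'A.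
  rewrite -/(c1 A' s) -/(c1 A s) /= => e.
  case: (eqVneq s (p.1 : nat).+1) => [es|sne].
  + rewrite es in e *; rewrite ltnSn ltnn in e.
    have eqA : c1 A (p.1 : nat).+1 = c1 A t0.
      apply: eq_bigr => q qA; case: (ltnP q.1 t0) => h.
        by rewrite ltnS (pmax q qA h).
      by rewrite ltnNge (leq_trans pt0 h).
    have := c1_mono B pt0.
    move: e eqA Pt0; set u := c1 A' _; set v := c1 A _; set w := c1 A t0;
      set z := c1 B t0; set y := c1 B _; move=> *; lia.
  + have hs : ((p.1 : nat) < s) = ((p.1 : nat).+1 < s).
      by apply/idP/idP => h; lia.
    rewrite hs in e; have e' : c1 A' s = c1 A s.
      by apply/eqP; rewrite -(eqn_add2r ((p.1 : nat).+1 < s)) e.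
    by rewrite e' dom.
- move=> s; have := swap_sum (fun q : 'I_a * 'I_b => ((q.2 : nat) < s : nat)) pA p'A.
  rewrite -/(c2 A' s) -/(c2 A s) /= => e.
  by apply/eqP; rewrite -(eqn_add2r (p.2 < s)) e.
- have := swap_sum (fun q : 'I_a * 'I_b => ((q.1 : nat) + q.2)) pA p'A.
  rewrite -/(msum A') -/(msum A) /= => e.
  move: e; set u := msum A'; set v := msum A; move=> *; lia.
Qed.

Lemma step2 a b k (A B : {set 'I_a * 'I_b}) t :
  antichain_k (@grid_le a b) k A -> antichain_k (@grid_le a b) k B ->
  (forall s, c2 B s <= c2 A s) -> c2 B t < c2 A t ->
  exists A', [/\ prec_k (@grid_le a b) k A A', (forall s, c2 B s <= c2 A' s),
     (forall s, c1 A' s = c1 A s) & msum A' = (msum A).+1].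
Proof.
move=> /andP [acA /eqP cA] /andP [acB /eqP cB] dom tlt.
have bnd : forall i, c2 B i < c2 A i -> i < b.
  move=> i h; rewrite ltnNge; apply/negP => ai; move: h.
  by rewrite !c2_full // cA cB ltnn.
have ex : exists i, c2 B i < c2 A i by exists t.
have ub : forall i, c2 B i < c2 A i -> i <= b by move=> i /bnd /ltnW.
case: (ex_maxnP ex ub) => t0 Pt0 maxt0.
have t0a := bnd _ Pt0.
have nP : c2 A t0.+1 <= c2 B t0.+1.
  by rewrite leqNgt; apply/negP => /maxt0; rewrite ltnn.
have noA : forall q, q \in A -> (q.2 : nat) != t0.
  move=> q qA; apply/negP => /eqP e.
  have h1 := e2_le1 t0 acB; have h2 := c2S A t0; have h3 := c2S B t0.
  have h4 : 0 < \sum_(r in A) ((r.2 : nat) == t0 : nat).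
    by apply: (sum_ge qA); rewrite e eqxx.
  lia.
have [q0 q0A q0t] : exists2 q, q \in A & (q.2 : nat) < t0.
  by apply: sum_pos; apply: leq_ltn_trans (leq0n _) Pt0.
pose p := [arg max_(q > q0 | (q \in A) && ((q.2 : nat) < t0)) (q.2 : nat)].
have [pA pt0 pmax] : [/\ p \in A, (p.2 : nat) < t0 &
    forall q, q \in A -> (q.2 : nat) < t0 -> (q.2 : nat) <= p.2].
  rewrite /p; case: arg_maxnP => [|r /andP [rA rt] H]; first by rewrite q0A q0t.
  by split => // q qA qt; apply: H; rewrite qA qt.
have hx : (p.2 : nat).+1 < b by apply: leq_ltn_trans pt0 t0a.
pose p' : 'I_a * 'I_b := (p.1, Ordinal hx).
have no1 : forall q, q \in A -> (q.2 : nat) != (p.2 : nat).+1.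
  move=> q qA; apply/negP => /eqP e.
  move: pt0; rewrite leq_eqVlt => /orP [/eqP e2 | lt].
  - by move: (noA q qA); rewrite e e2 eqxx.
  - have h := pmax q qA; rewrite e in h.
    by move: (h lt); rewrite ltnn.
have p'A : p' \notin A by apply/negP => /no1 /=; rewrite eqxx.
have [d1 d2] := swap_diff pA p'A.
pose A' := p' |: A :\ p.
have acA' : antichain (@grid_le a b) A'.
  apply: acI => r s; rewrite !in_setU1 !in_setD1.
  move=> /orP [/eqP -> | /andP [rp rA]] /orP [/eqP -> | /andP [sp sA]] //.
  - move=> /andP [l1 l2].
    by move: (ac_lt2 acA pA sA l2); rewrite ltnNge l1.
  - move=> /andP [l1 l2].
    have h : (r.2 : nat) <= p.2.
      by move: l2; rewrite /= leq_eqVlt (negbTE (no1 r rA)) ltnS.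
    by case/eqP: rp; apply: (acP acA rA pA); rewrite /grid_le h l1.
  - exact: (acP acA rA sA).
have cA' : #|A'| = k.
  by rewrite cardsU1 in_setD1 (negbTE p'A) andbF -cA (cardsD1 p A) pA.
exists A'; split.
- split; first by rewrite /antichain_k acA cA eqxx.
  split; first by rewrite /antichain_k acA' cA' eqxx.
  exists p, p'; split => //; split => //.
  rewrite /slt /grid_le /= leqnSn leqnn /=.
  by apply/eqP => e; move: p'A; rewrite -e pA.
- move=> s; have := swap_sum (fun q : 'I_a * 'I_b => ((q.2 : nat) < s : nat)) pA p'A.
  rewrite -/(c2 A' s) -/(c2 A s) /= => e.
  case: (eqVneq s (p.2 : nat).+1) => [es|sne].
  + rewrite es in e *; rewrite ltnSn ltnn in e.
    have eqA : c2 A (p.2 : nat).+1 = c2 A t0.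
      apply: eq_bigr => q qA; case: (ltnP q.2 t0) => h.
        by rewrite ltnS (pmax q qA h).
      by rewrite ltnNge (leq_trans pt0 h).
    have := c2_mono B pt0.
    move: e eqA Pt0; set u := c2 A' _; set v := c2 A _; set w := c2 A t0;
      set z := c2 B t0; set y := c2 B _; move=> *; lia.
  + have hs : ((p.2 : nat) < s) = ((p.2 : nat).+1 < s).
      by apply/idP/idP => h; lia.
    rewrite hs in e; have e' : c2 A' s = c2 A s.
      by apply/eqP; rewrite -(eqn_add2r ((p.2 : nat).+1 < s)) e.
    by rewrite e' dom.
- move=> s; have := swap_sum (fun q : 'I_a * 'I_b => ((q.1 : nat) < s : nat)) pA p'A.
  rewrite -/(c1 A' s) -/(c1 A s) /= => e.
  by apply/eqP; rewrite -(eqn_add2r (p.1 < s)) e.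
- have := swap_sum (fun q : 'I_a * 'I_b => ((q.1 : nat) + q.2)) pA p'A.
  rewrite -/(msum A') -/(msum A) /= => e.
  move: e; set u := msum A'; set v := msum A; move=> *; lia.
Qed.


Lemma mem_fst a b (A : {set 'I_a * 'I_b}) (x : 'I_a) :
  (x \in [set q.1 | q in A]) = (0 < \sum_(q in A) ((q.1 : nat) == x : nat)).
Proof.
apply/imsetP/idP => [[q qA ->]|h]; first by apply: (sum_ge qA); rewrite eqxx.
by case: (sum_pos h) => q qA /eqP e; exists q => //; apply: val_inj.
Qed.
Lemma mem_snd a b (A : {set 'I_a * 'I_b}) (x : 'I_b) :
  (x \in [set q.2 | q in A]) = (0 < \sum_(q in A) ((q.2 : nat) == x : nat)).
Proof.
apply/imsetP/idP => [[q qA ->]|h]; first by apply: (sum_ge qA); rewrite eqxx.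
by case: (sum_pos h) => q qA /eqP e; exists q => //; apply: val_inj.
Qed.

Lemma fst_det a b (A B : {set 'I_a * 'I_b}) :
  (forall t, c1 A t = c1 B t) -> [set q.1 | q in A] = [set q.1 | q in B].
Proof.
move=> H; apply/setP => x; rewrite !mem_fst.
have eA := c1S A x; have eB := c1S B x.
have -> : \sum_(q in A) ((q.1 : nat) == x : nat) = c1 A x.+1 - c1 A x by rewrite eA addKn.
have -> : \sum_(q in B) ((q.1 : nat) == x : nat) = c1 B x.+1 - c1 B x by rewrite eB addKn.
by rewrite !H.
Qed.
Lemma snd_det a b (A B : {set 'I_a * 'I_b}) :
  (forall t, c2 A t = c2 B t) -> [set q.2 | q in A] = [set q.2 | q in B].
Proof.
move=> H; apply/setP => x; rewrite !mem_snd.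
have eA := c2S A x; have eB := c2S B x.
have -> : \sum_(q in A) ((q.2 : nat) == x : nat) = c2 A x.+1 - c2 A x by rewrite eA addKn.
have -> : \sum_(q in B) ((q.2 : nat) == x : nat) = c2 B x.+1 - c2 B x by rewrite eB addKn.
by rewrite !H.
Qed.

Lemma msum_bnd a b (S : {set 'I_a * 'I_b}) : msum S <= #|S| * (a + b).
Proof.
rewrite -sum_nat_const; apply: leq_sum => q _.
by apply: leq_add; apply: ltnW.
Qed.

Lemma dich a b k (A B : {set 'I_a * 'I_b}) :
  antichain_k (@grid_le a b) k A -> antichain_k (@grid_le a b) k B ->
  (forall s, c1 B s <= c1 A s) -> (forall s, c2 B s <= c2 A s) ->
  A = B \/ exists A', [/\ prec_k (@grid_le a b) k A A', (forall s, c1 B s <= c1 A' s),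
     (forall s, c2 B s <= c2 A' s) & msum A' = (msum A).+1].
Proof.
move=> hA hB d1 d2.
case: (classic (exists t, c1 B t < c1 A t)) => [[t ht]|N1].
  have [A' [p h1 h2 h3]] := step1 hA hB d1 ht.
  by right; exists A'; split => // s; rewrite h2.
case: (classic (exists t, c2 B t < c2 A t)) => [[t ht]|N2].
  have [A' [p h1 h2 h3]] := step2 hA hB d2 ht.
  by right; exists A'; split => // s; rewrite h2.
left.
have e1 : forall t, c1 A t = c1 B t.
  move=> t; apply/eqP; rewrite eqn_leq d1 andbT leqNgt; apply/negP => h; apply: N1; by exists t.
have e2 : forall t, c2 A t = c2 B t.
  move=> t; apply/eqP; rewrite eqn_leq d2 andbT leqNgt; apply/negP => h; apply: N2; by exists t.
case/andP: hA => acA _; case/andP: hB => acB _.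
by rewrite -(gset_f acA) -(gset_f acB) (fst_det e1) (snd_det e2).
Qed.

Lemma main_rev a b k (A B : {set 'I_a * 'I_b}) :
  antichain_k (@grid_le a b) k A -> antichain_k (@grid_le a b) k B ->
  (forall s, c1 B s <= c1 A s) -> (forall s, c2 B s <= c2 A s) ->
  le_k (@grid_le a b) k A B.
Proof.
move=> hA hB; move: {2}(k * (a + b) - msum A) (leqnn (k * (a + b) - msum A)) => n.
elim: n A hA => [|n IH] A hA hn d1 d2.
  case: (dich hA hB d1 d2) => [->|[A' [p h1 h2 h3]]]; first exact: rt_refl.
  have := msum_bnd A'; case: p => _ [/andP [_ /eqP ->] _] bd.
  move: hn bd; rewrite h3; set u := msum A; set N := k * (a + b); move=> *; lia.
case: (dich hA hB d1 d2) => [->|[A' [p h1 h2 h3]]]; first exact: rt_refl.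
have hA' : antichain_k (@grid_le a b) k A' by case: p => _ [].
apply: rt_trans (rt_step _ _ _ _ p) (IH A' hA' _ h1 h2).
have := msum_bnd A'; case/andP: hA' => _ /eqP -> bd.
move: hn bd; rewrite h3; set u := msum A; set N := k * (a + b); move=> *; lia.
Qed.


Lemma fst_ok a b k (A : Ak a b k) : #|[set q.1 | q in val A]| == k.
Proof. by case/andP: (valP A) => acA /eqP cA; rewrite card_fst // cA. Qed.
Lemma snd_ok a b k (A : Ak a b k) : #|[set q.2 | q in val A]| == k.
Proof. by case/andP: (valP A) => acA /eqP cA; rewrite card_snd // cA. Qed.

Definition fmap a b k (A : Ak a b k) : Cnk a k * Cnk b k :=
  (exist (fun X : {set 'I_a} => #|X| == k) _ (fst_ok A), exist (fun Y : {set 'I_b} => #|Y| == k) _ (snd_ok A)).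

Lemma g_ok a b k (XY : Cnk a k * Cnk b k) :
  antichain_k (@grid_le a b) k (gset (val XY.1) (val XY.2)).
Proof.
have eX := eqP (valP XY.1); have eY := eqP (valP XY.2).
have e : #|val XY.1| = #|val XY.2| by rewrite eX eY.
rewrite /antichain_k (@card_gset _ _ _ _ e) eX eqxx andbT; exact: ac_gset.
Qed.

Definition gmap a b k (XY : Cnk a k * Cnk b k) : Ak a b k := exist (fun A => antichain_k (@grid_le a b) k A) _ (g_ok XY).

Unset Implicit Arguments.
Theorem proposition3p1 (a b k : nat) (hk : (k <= minn a b)%N) :
  exists f : Ak a b k -> Cnk a k * Cnk b k,
    bijective f /\
    forall A B : Ak a b k,
      le_k (@grid_le a b) k (val A) (val B) <->
      (C_le (val (f A).1) (val (f B).1) && C_le (val (f A).2) (val (f B).2)).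
Proof.
exists (@fmap a b k); split.
  exists (@gmap a b k).
    move=> A; apply: val_inj => /=; apply: gset_f; by case/andP: (valP A).
  move=> [X Y]; have eX := eqP (valP X); have eY := eqP (valP Y).
  have e : #|val X| = #|val Y| by rewrite eX eY.
  congr pair; apply: val_inj => /=; [exact: (@gset_fst _ _ _ _ e) | exact: (@gset_snd _ _ _ _ e)].
move=> A B.
case/andP: (valP A) => acA /eqP cA; case/andP: (valP B) => acB /eqP cB.
have e1 : #|[set q.1 | q in val A]| = #|[set q.1 | q in val B]|.
  by rewrite !card_fst // cA cB.
have e2 : #|[set q.2 | q in val A]| = #|[set q.2 | q in val B]|.
  by rewrite !card_snd // cA cB.
rewrite /=; split.
  move=> /le_mono [h1 h2]; apply/andP; split.
    by apply/(C_leP e1) => t; rewrite !cnt_fst.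
  by apply/(C_leP e2) => t; rewrite !cnt_snd.
move=> /andP [/(C_leP e1) H1 /(C_leP e2) H2].
apply: main_rev (valP A) (valP B) _ _ => t.
  by have := H1 t; rewrite !cnt_fst.
by have := H2 t; rewrite !cnt_snd.
Qed.
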